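(* Fix an integer $r\ge2$. There exist constants $d_0=d_0(r)>0$ and $K=K(r)>0$ such that for every $d>d_0$, every $\lambda\in[0,1]$ with $(r-1)d\lambda^2\le1$, and every BMS channel $P$, letting $\theta$ be the $\theta$-component of $P^{\times(r-1)}\circ B_{r,\lambda}$ and $\widetilde\theta=\theta\xi$ where $\xi\in\{\pm1\}$ with $\mathbb P[\xi=s\mid\theta]=\frac12+\frac12 s\theta$, we have $\big|\mathbb E\,\mathrm{arctanh}\,\widetilde\theta-s_{r,\lambda}(C_{\chi^2}(P))\big|\le K\lambda^3$ and $\big|\mathrm{Var}(\mathrm{arctanh}\,\widetilde\theta)-s_{r,\lambda}(C_{\chi^2}(P))\big|\le K\lambda^3$, where $s_{r,\lambda}(x)=\lambda^2\cdot\frac12\big((1+x)^{r-1}-(1-x)^{r-1}\big)$.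
   Context: $B_{r,\lambda}:\{\pm\}\to\{\pm\}^{r-1}$ is the kernel $B_{r,\lambda}(x|y)=\lambda+2^{-(r-1)}(1-\lambda)$ if $x_i=y$ for all $i$, and $2^{-(r-1)}(1-\lambda)$ otherwise. A channel $P:\{\pm\}\to\mathcal Y$ is BMS if there is a measurable involution $\sigma$ of $\mathcal Y$ with $P(E|+)=P(\sigma(E)|-)$. Every BMS channel is equivalent to $X\mapsto(\Delta,Z)$ with $\Delta\in[0,\frac12]$ a random variable independent of $X$ and $Z\mid(\Delta,X)\sim\mathrm{BSC}_\Delta(\cdot|X)$; the $\theta$-component is $\theta=1-2\Delta\in[0,1]$ (its law is determined by the channel). $C_{\chi^2}(P)=\mathbb E\theta^2$ is the $\chi^2$-information with uniform input. $P^{\times(r-1)}$ is the tensor power. *)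

(* Defs.v *)
From HB Require Import structures.
From mathcomp Require Import all_boot all_order all_algebra.
From mathcomp Require Import all_classical all_reals all_analysis.
Unset Printing Implicit Defensive.
Import Order.TTheory GRing.Theory Num.Theory.
Local Open Scope ring_scope.

Section BMS.
Variable R : realType.

(* sign of a channel symbol: true = +, false = - *)
Definition sgnb (b : bool) : R := if b then 1 else -1.

Definition atanh (x : R) : R := ln ((1 + x) / (1 - x)) / 2.

(* The kernel B_{r,lambda} : {+-} -> {+-}^n  (n = r-1), value B(u | x). *)
Definition Bker (lam : R) (n : nat) (x : bool) (u : n.-tuple bool) : R :=
  if all (fun b => b == x) u then lam + 2 ^- n * (1 - lam)
  else 2 ^- n * (1 - lam).

(* Canonical BMS channel with theta-law mu: input u, output (t, z) with
   t ~ mu independent of u and z | (t,u) ~ BSC_{(1-t)/2}(.|u).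
   Density of z given (t,u) w.r.t. counting measure: *)
Definition bsc_dens (t : R) (u z : bool) : R := (1 + sgnb u * sgnb z * t) / 2.

(* Density of the output ((t_1,z_1),...,(t_n,z_n)) of P^{x n} o B_{r,lambda}
   on input x, w.r.t. mu^{(x) n} (x) counting. *)
Definition comp_dens (lam : R) (n : nat) (x : bool) (ts : seq R)
    (zs : n.-tuple bool) : R :=
  \sum_(u : n.-tuple bool)
     Bker lam n x u * \prod_(i : 'I_n) bsc_dens (nth 0 ts i) (tnth u i) (tnth zs i).

Definition theta_out (lam : R) (n : nat) (ts : seq R) (zs : n.-tuple bool) : R :=
  `|comp_dens lam n true ts zs - comp_dens lam n false ts zs|
    / (comp_dens lam n true ts zs + comp_dens lam n false ts zs).

Fixpoint iint (mu : {measure set R -> \bar R}) (n : nat) (F : seq R -> R) : R :=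
  match n with
  | 0 => F [::]
  | n'.+1 => \int[mu]_t iint mu n' (fun s => F (t :: s))
  end.

(* E[g(theta)] where theta is the theta-component of P^{x n} o B_{r,lambda},
   computed as E[g(theta(Y))] with Y ~ (P^{x n} o B)(. | +). *)
Definition theta_comp_expect (mu : {measure set R -> \bar R}) (lam : R) (n : nat)
    (g : R -> R) : R :=
  iint mu n (fun ts => \sum_(zs : n.-tuple bool)
                         comp_dens lam n true ts zs * g (theta_out lam n ts zs)).

(* E[h(theta~)] with theta~ = theta * xi, P[xi = s | theta] = 1/2 + s theta / 2 *)
Definition tilde_expect (mu : {measure set R -> \bar R}) (lam : R) (n : nat)
    (h : R -> R) : R :=
  theta_comp_expect mu lam n
    (fun t => \sum_(s : bool) (1 + sgnb s * t) / 2 * h (sgnb s * t)).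

Definition mean_atanh_tilde mu lam n : R := tilde_expect mu lam n atanh.

Definition var_atanh_tilde mu lam n : R :=
  tilde_expect mu lam n (fun v => atanh v ^+ 2) - (mean_atanh_tilde mu lam n) ^+ 2.

Definition C_chi2 (mu : {measure set R -> \bar R}) : R := \int[mu]_t (t ^+ 2).

Definition s_fun (r : nat) (lam x : R) : R :=
  lam ^+ 2 * (1 / 2 * ((1 + x) ^+ (r - 1) - (1 - x) ^+ (r - 1))).

End BMS.

(* Main.v *)
Require Import Defs.
From HB Require Import structures.
From mathcomp Require Import all_boot all_order all_algebra.
From mathcomp Require Import all_classical all_reals all_analysis.
From mathcomp Require Import ring lra.
Import Order.TTheory GRing.Theory Num.Theory.
Import numFieldNormedType.Exports.
Local Open Scope ring_scope.
Local Open Scope classical_set_scope.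

Section AT.
Variable R : realType.

Lemma ln1D_ge (x : R) : -1 < x -> x / (1 + x) <= ln (1 + x).
Proof.
move=> hx.
have h0 : 0 < 1 + x by lra.
have := @le_ln1Dx R ((1 + x)^-1 - 1).
have h1 : -1 < (1 + x)^-1 - 1.
  have : 0 < (1 + x)^-1 by rewrite invr_gt0.
  lra.
move=> /(_ h1); rewrite addrC subrK lnV ?posrE //.
move=> H.
have -> : x / (1 + x) = - ((1 + x)^-1 - 1).
  by field; lra.
lra.
Qed.

Lemma atanh_odd (x : R) : -1 < x < 1 -> atanh R (- x) = - atanh R x.
Proof.
move=> /andP[h1 h2]; rewrite /atanh.
have -> : (1 + - x) / (1 - - x) = ((1 + x) / (1 - x))^-1.
  by rewrite opprK invf_div addrC.
rewrite lnV ?mulNr // posrE divr_gt0 //; lra.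
Qed.

Lemma atanh_err (x : R) : `|x| <= 1/2 -> `|atanh R x - x| <= x ^+ 2.
Proof.
move=> hx.
have hx1 : -(1/2) <= x <= 1/2 by rewrite -ler_norml.
case/andP: hx1 => ha hb.
have p1 : 0 < 1 + x by lra.
have p2 : 0 < 1 - x by lra.
have e : atanh R x = (ln (1 + x) - ln (1 - x)) / 2.
  by rewrite /atanh ln_div ?posrE.
have u1 : ln (1 + x) <= x by apply: le_ln1Dx; lra.
have u2 : ln (1 - x) <= - x by apply: le_ln1Dx; lra.
have l1 : x / (1 + x) <= ln (1 + x) by apply: ln1D_ge; lra.
have l2 : (- x) / (1 + - x) <= ln (1 + - x) by apply: ln1D_ge; lra.
rewrite e ler_norml; apply/andP; split.
- have q : x / (1 + x) - x >= - 2 * x ^+ 2.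
    have -> : x / (1 + x) - x = - (x ^+ 2 / (1 + x)) by field; lra.
    have : x ^+ 2 / (1 + x) <= 2 * x ^+ 2.
      rewrite ler_pdivrMr //; nra.
    lra.
  lra.
- have q : (- x) / (1 + - x) + x >= - 2 * x ^+ 2.
    have -> : (- x) / (1 + - x) + x = - (x ^+ 2 / (1 - x)) by field; lra.
    have : x ^+ 2 / (1 - x) <= 2 * x ^+ 2.
      rewrite ler_pdivrMr //; nra.
    lra.
  lra.
Qed.

Lemma H_atanh (x : R) : 0 <= x <= 1/2 ->
  `| \sum_(s : bool) (1 + sgnb R s * x) / 2 * atanh R (sgnb R s * x) - x ^+ 2 | <= x ^+ 3.
Proof.
move=> /andP[h0 h1].
rewrite big_bool /= /sgnb !mul1r !mulN1r atanh_odd; last by apply/andP; split; lra.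
have hx : `|x| <= 1/2 by rewrite ger0_norm.
have E := @atanh_err x hx.
set a := atanh R x in E *.
have -> : (1 + x) / 2 * a + (1 + - x) / 2 * - a - x ^+ 2 = x * (a - x).
  by field.
rewrite normrM ger0_norm // exprS.
by apply: ler_wpM2l.
Qed.

Lemma H_atanh2 (x : R) : 0 <= x <= 1/2 ->
  `| \sum_(s : bool) (1 + sgnb R s * x) / 2 * (atanh R (sgnb R s * x)) ^+ 2 - x ^+ 2 | <= 3 * x ^+ 3.
Proof.
move=> /andP[h0 h1].
rewrite big_bool /= /sgnb !mul1r !mulN1r atanh_odd; last by apply/andP; split; lra.
have hx : `|x| <= 1/2 by rewrite ger0_norm.
have E := @atanh_err x hx.
set a := atanh R x in E *.
have -> : (1 + x) / 2 * a ^+ 2 + (1 + - x) / 2 * (- a) ^+ 2 - x ^+ 2 = (a - x) * ((a - x) + 2 * x).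
  by field.
rewrite normrM.
have e2 : `|a - x + 2 * x| <= x ^+ 2 + 2 * x.
  apply: (le_trans (ler_normD _ _)).
  have -> : `|2 * x| = 2 * x by rewrite ger0_norm //; lra.
  by rewrite lerD2r.
have : `|a - x| * `|a - x + 2 * x| <= x ^+ 2 * (x ^+ 2 + 2 * x).
  by apply: ler_pM => //.
have : x ^+ 2 * (x ^+ 2 + 2 * x) <= 3 * x ^+ 3.
  have -> : x ^+ 2 * (x ^+ 2 + 2 * x) = x ^+ 3 * (x + 2) by ring.
  rewrite mulrC ler_wpM2r //; [ by apply: exprn_ge0 | lra].
lra.
Qed.

End AT.

Section K.
Variable R : realType.

Lemma key_theta (lam Pp Pm N : R) : 1 <= N -> 0 <= lam -> 2 * N * lam <= 1 ->
  0 <= Pp <= N -> 0 <= Pm <= N ->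
  let A := 1 - lam + lam * Pp in let Am := 1 - lam + lam * Pm in
  let th := `|A - Am| / (A + Am) in
  [/\ 0 <= th, th <= lam * N, 1 <= A + Am, 0 <= A &
      `|A * th ^+ 2 - lam ^+ 2 * (Pp - Pm) ^+ 2 / 4| <= 2 * N ^+ 4 * lam ^+ 3].
Proof.
move=> hN hl hlN /andP[hp1 hp2] /andP[hm1 hm2] A Am th.
have hl2 : lam <= 1/2.
  have : lam <= N * lam by rewrite ler_peMl.
  lra.
have hT : 1 <= A + Am by rewrite /A /Am; nra.
have hT0 : 0 < A + Am by lra.
have hA : 0 <= A by rewrite /A; nra.
have eD : A - Am = lam * (Pp - Pm) by rewrite /A /Am; ring.
have hD : `|Pp - Pm| <= N by rewrite ler_norml; apply/andP; split; lra.
have th0 : 0 <= th by rewrite /th divr_ge0 //; lra.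
have thle : th <= lam * N.
  rewrite /th eD normrM ger0_norm // ler_pdivrMr //.
  have : lam * `|Pp - Pm| <= lam * N by rewrite ler_wpM2l.
  have : 0 <= lam * N by rewrite mulr_ge0 //; lra.
  nra.
split => //.
set T := A + Am.
have hT' : 1 <= T := hT.
have e : A * th ^+ 2 - lam ^+ 2 * (Pp - Pm) ^+ 2 / 4 =
   lam ^+ 2 * (Pp - Pm) ^+ 2 * (4 * A - T ^+ 2) / (4 * T ^+ 2).
  have th2 : th ^+ 2 = (A - Am) ^+ 2 / T ^+ 2.
    by rewrite /th expr_div_n real_normK // num_real.
  rewrite th2 eD; field; exact: lt0r_neq0.
have e2 : 4 * A - T ^+ 2 = 4 * lam * (1 - Pm) - lam ^+ 2 * (Pp + Pm - 2) ^+ 2.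
  by rewrite /T /A /Am; ring.
have b1 : `|4 * A - T ^+ 2| <= 8 * N ^+ 2 * lam.
  rewrite e2; apply: (le_trans (ler_normB _ _)).
  have c1 : `|4 * lam * (1 - Pm)| <= 4 * N * lam.
    rewrite normrM ger0_norm; last lra.
    have : `|1 - Pm| <= N by rewrite ler_norml; apply/andP; split; lra.
    move=> h; nra.
  have c2 : `|lam ^+ 2 * (Pp + Pm - 2) ^+ 2| <= 4 * N ^+ 2 * lam.
    rewrite ger0_norm; last by rewrite mulr_ge0 // sqr_ge0.
    have : (Pp + Pm - 2) ^+ 2 <= 4 * N ^+ 2.
      have : `|Pp + Pm - 2| <= 2 * N by rewrite ler_norml; apply/andP; split; lra.
      move=> h; rewrite -real_normK ?num_real //.
      have -> : 4 * N ^+ 2 = (2 * N) ^+ 2 by ring.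
      by rewrite lerXn2r // ?nnegrE //; lra.
    have : lam ^+ 2 <= lam by rewrite expr2 ler_piMl //; lra.
    have : 0 <= (Pp + Pm - 2) ^+ 2 by apply: sqr_ge0.
    nra.
  have : 4 * N * lam <= 4 * N ^+ 2 * lam by nra.
  lra.
rewrite e normrM normfV.
have hT2 : 1 <= `|4 * T ^+ 2| / 4.
  rewrite ger0_norm; last by nra.
  have : 1 <= T ^+ 2 by nra.
  lra.
have nn : `|lam ^+ 2 * (Pp - Pm) ^+ 2| <= lam ^+ 2 * N ^+ 2.
  rewrite normrM normrX [`|(Pp - Pm) ^+ 2|]normrX ger0_norm; last lra.
  rewrite ler_wpM2l //; first by apply: exprn_ge0.
  by rewrite lerXn2r // ?nnegrE //; lra.
have hpos : 0 < `|4 * T ^+ 2| by rewrite normr_gt0; nra.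
rewrite ler_pdivrMr // normrM.
have H1 : `|lam ^+ 2 * (Pp - Pm) ^+ 2| * `|4 * A - T ^+ 2| <= lam ^+ 2 * N ^+ 2 * (8 * N ^+ 2 * lam).
  by apply: ler_pM => //; apply: normr_ge0.
have H2 : 2 * N ^+ 4 * lam ^+ 3 * 4 <= 2 * N ^+ 4 * lam ^+ 3 * `|4 * T ^+ 2|.
  apply: ler_wpM2l.
    apply: mulr_ge0; last by apply: exprn_ge0.
    by apply: mulr_ge0; [lra | apply: exprn_ge0; lra].
  lra.
have E3 : lam ^+ 2 * N ^+ 2 * (8 * N ^+ 2 * lam) = 2 * N ^+ 4 * lam ^+ 3 * 4 by ring.
lra.
Qed.

End K.

Section B.
Variable R : realType.

Lemma sum_tuple_prod n (F : 'I_n -> bool -> R) :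
  \sum_(u : n.-tuple bool) \prod_(i < n) F i (tnth u i) =
  \prod_(i < n) \sum_(b : bool) F i b.
Proof.
rewrite bigA_distr_bigA /=.
rewrite (reindex (fun u : n.-tuple bool => [ffun i => tnth u i])) /=.
  by apply: eq_bigr => u _; apply: eq_bigr => i _; rewrite ffunE.
exists (fun f : {ffun 'I_n -> bool} => [tuple f i | i < n]) => [u _ | f _].
  by apply: eq_from_tnth => i; rewrite tnth_mktuple ffunE.
by apply/ffunP => i; rewrite ffunE tnth_mktuple.
Qed.

Lemma prod_half n (F : 'I_n -> R) :
  \prod_(i < n) (F i / 2) = 2 ^- n * \prod_(i < n) F i.
Proof.
rewrite big_split /= prodr_const card_ord mulrC.
by rewrite exprVn.
Qed.

Lemma comp_dens_eq lam n x (ts : seq R) (zs : n.-tuple bool) :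
  comp_dens R lam n x ts zs =
  2 ^- n * ((1 - lam) + lam * \prod_(i < n)
       (1 + sgnb R x * (sgnb R (tnth zs i) * nth 0 ts i))).
Proof.
rewrite /comp_dens /Bker.
pose u0 : n.-tuple bool := [tuple x | _ < n].
under eq_bigr => u _.
  rewrite (_ : (if all (fun b => b == x) u then lam + 2 ^- n * (1 - lam)
               else 2 ^- n * (1 - lam)) =
            2 ^- n * (1 - lam) + (if u == u0 then lam else 0)); last first.
    case: ifP => hu; case: eqP => hu0 //.
    - by rewrite addrC.
    - exfalso; apply: hu0; apply: eq_from_tnth => i.
      by rewrite tnth_mktuple; move/all_tnthP: hu => /(_ i) /eqP.
    - by rewrite hu0 in hu; move: hu => /all_tnthP; case => i; rewrite tnth_mktuple.
    - by rewrite addr0.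
  rewrite mulrDl.
  over.
rewrite big_split /=.
rewrite -mulr_sumr.
rewrite (@sum_tuple_prod n (fun i b => bsc_dens R (nth 0 ts i) b (tnth zs i))).
have h1 : \prod_(i < n) \sum_b bsc_dens R (nth 0 ts i) b (tnth zs i) = 1.
  by apply: big1 => i _; rewrite big_bool /bsc_dens /sgnb /=; field.
rewrite h1 mulr1.
rewrite (bigD1 u0) //= eqxx.
have h2 : \sum_(i | i != u0) (if i == u0 then lam else 0) *
     \prod_(i0 < n) bsc_dens R (nth 0 ts i0) (tnth i i0) (tnth zs i0) = 0.
  by apply: big1 => u /negPf ->; rewrite mul0r.
rewrite h2 addr0.
under eq_bigr => i _ do rewrite tnth_mktuple /bsc_dens -mulrA.
rewrite (@prod_half n (fun i : 'I_n => 1 + sgnb R x * (sgnb R (tnth zs i) * nth 0 ts i))).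
by ring.
Qed.

End B.

Section B2.
Variable R : realType.
Variable n : nat.
Variable ts : seq R.
Local Notation t i := (nth 0 ts i).

Lemma sum_prod_gen (G : bool -> R -> R) :
  \sum_(zs : n.-tuple bool) \prod_(i < n) G (tnth zs i) (t i) =
  \prod_(i < n) (G true (t i) + G false (t i)).
Proof.
rewrite (@sum_tuple_prod R n (fun i b => G b (t i))).
by apply: eq_bigr => i _; rewrite big_bool.
Qed.

Lemma prod_mul2 (F : 'I_n -> R) : \prod_(i < n) (2 * F i) = 2 ^+ n * \prod_(i < n) F i.
Proof. by rewrite big_split /= prodr_const card_ord. Qed.

Definition Pp (zs : n.-tuple bool) := \prod_(i < n) (1 + sgnb R (tnth zs i) * t i).
Definition Pm (zs : n.-tuple bool) := \prod_(i < n) (1 - sgnb R (tnth zs i) * t i).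

Lemma sum_Pp : \sum_(zs : n.-tuple bool) Pp zs = 2 ^+ n.
Proof.
rewrite /Pp (sum_prod_gen (fun b x => 1 + sgnb R b * x)).
rewrite (eq_bigr (fun _ => 2)); first by rewrite prodr_const card_ord.
by move=> i _; rewrite /sgnb; ring.
Qed.

Lemma sum_one : \sum_(zs : n.-tuple bool) (1 : R) = 2 ^+ n.
Proof. by rewrite sumr_const card_tuple card_bool -natrX. Qed.

Lemma sum_D2 : \sum_(zs : n.-tuple bool) (Pp zs - Pm zs) ^+ 2 =
  2 ^+ n * (2 * (\prod_(i < n) (1 + t i ^+ 2) - \prod_(i < n) (1 - t i ^+ 2))).
Proof.
have e : forall zs, (Pp zs - Pm zs) ^+ 2 =
   \prod_(i < n) (1 + sgnb R (tnth zs i) * t i) ^+ 2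
   + \prod_(i < n) (1 - sgnb R (tnth zs i) * t i) ^+ 2
   - 2 * \prod_(i < n) ((1 + sgnb R (tnth zs i) * t i) * (1 - sgnb R (tnth zs i) * t i)).
  move=> zs; rewrite /Pp /Pm !prodrXl big_split /=; ring.
under eq_bigr => zs _ do rewrite e.
rewrite big_split /= sumrN big_split /= -mulr_sumr.
rewrite (sum_prod_gen (fun b x => (1 + sgnb R b * x) ^+ 2)).
rewrite (sum_prod_gen (fun b x => (1 - sgnb R b * x) ^+ 2)).
rewrite (sum_prod_gen (fun b x => (1 + sgnb R b * x) * (1 - sgnb R b * x))).
have e1 : \prod_(i < n) ((1 + sgnb R true * t i) ^+ 2 + (1 + sgnb R false * t i) ^+ 2)
   = 2 ^+ n * \prod_(i < n) (1 + t i ^+ 2).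
  by rewrite -prod_mul2; apply: eq_bigr => i _; rewrite /sgnb; ring.
have e2 : \prod_(i < n) ((1 - sgnb R true * t i) ^+ 2 + (1 - sgnb R false * t i) ^+ 2)
   = 2 ^+ n * \prod_(i < n) (1 + t i ^+ 2).
  by rewrite -prod_mul2; apply: eq_bigr => i _; rewrite /sgnb; ring.
have e3 : \prod_(i < n) ((1 + sgnb R true * t i) * (1 - sgnb R true * t i) +
       (1 + sgnb R false * t i) * (1 - sgnb R false * t i))
   = 2 ^+ n * \prod_(i < n) (1 - t i ^+ 2).
  by rewrite -prod_mul2; apply: eq_bigr => i _; rewrite /sgnb; ring.
rewrite e1 e2 e3; ring.
Qed.

End B2.

Section B3.
Variable R : realType.
Variable n : nat.
Variable ts : seq R.
Local Notation t i := (nth 0 ts i).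
Local Notation N := ((2 : R) ^+ n).

Hypothesis ht : forall i : nat, (i < n)%N -> 0 <= t i <= 1.

Lemma Pp_bounds zs : 0 <= Pp R n ts zs <= N.
Proof.
have hf : forall i : 'I_n, 0 <= 1 + sgnb R (tnth zs i) * t i <= 2.
  move=> i; have := @ht i (ltn_ord i); rewrite /sgnb; case: (tnth zs i) => /andP[a b];
  apply/andP; split; lra.
apply/andP; split.
  by apply: prodr_ge0 => i _; case/andP: (hf i).
rewrite (_ : (2 : R) ^+ n = \prod_(i < n) (2 : R)); last by rewrite prodr_const card_ord.
apply: ler_prod => i _; exact: hf.
Qed.

Lemma Pm_bounds zs : 0 <= Pm R n ts zs <= N.
Proof.
have hf : forall i : 'I_n, 0 <= 1 - sgnb R (tnth zs i) * t i <= 2.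
  move=> i; have := @ht i (ltn_ord i); rewrite /sgnb; case: (tnth zs i) => /andP[a b];
  apply/andP; split; lra.
apply/andP; split.
  by apply: prodr_ge0 => i _; case/andP: (hf i).
rewrite (_ : (2 : R) ^+ n = \prod_(i < n) (2 : R)); last by rewrite prodr_const card_ord.
apply: ler_prod => i _; exact: hf.
Qed.

Lemma cd_true lam zs : comp_dens R lam n true ts zs = N^-1 * (1 - lam + lam * Pp R n ts zs).
Proof.
rewrite comp_dens_eq /Pp; congr (_ * (_ + _ * _)).
by apply: eq_bigr => i _; rewrite /sgnb mul1r.
Qed.

Lemma cd_false lam zs : comp_dens R lam n false ts zs = N^-1 * (1 - lam + lam * Pm R n ts zs).
Proof.
rewrite comp_dens_eq /Pm; congr (_ * (_ + _ * _)).
by apply: eq_bigr => i _; rewrite /sgnb mulN1r.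
Qed.

Lemma theta_eq lam zs : theta_out R lam n ts zs =
  `|(1 - lam + lam * Pp R n ts zs) - (1 - lam + lam * Pm R n ts zs)| /
   ((1 - lam + lam * Pp R n ts zs) + (1 - lam + lam * Pm R n ts zs)).
Proof.
rewrite /theta_out cd_true cd_false -mulrBr -mulrDr normrM.
have hN : 0 < N^-1 by rewrite invr_gt0 exprn_gt0.
rewrite (gtr0_norm hN) invfM mulrACA divff ?mul1r //.
Qed.

Lemma pointwise lam (Hh : R -> R) :
  (forall x, 0 <= x <= 1/2 -> `|Hh x - x ^+ 2| <= 3 * x ^+ 3) ->
  0 <= lam -> 2 * N * lam <= 1 ->
  `| \sum_(zs : n.-tuple bool) comp_dens R lam n true ts zs * Hh (theta_out R lam n ts zs)
     - lam ^+ 2 / 2 * (\prod_(i < n) (1 + t i ^+ 2) - \prod_(i < n) (1 - t i ^+ 2)) |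
   <= 5 * N ^+ 4 * lam ^+ 3.
Proof.
move=> hH hl hlN.
have hN1 : 1 <= N by apply: exprn_ege1; lra.
have hN0 : 0 < N by lra.
have target : lam ^+ 2 / 2 * (\prod_(i < n) (1 + t i ^+ 2) - \prod_(i < n) (1 - t i ^+ 2))
   = \sum_(zs : n.-tuple bool) N^-1 * (lam ^+ 2 * (Pp R n ts zs - Pm R n ts zs) ^+ 2 / 4).
  rewrite (eq_bigr (fun zs => (N^-1 * (lam ^+ 2 / 4)) * (Pp R n ts zs - Pm R n ts zs) ^+ 2));
    last by move=> zs _; ring.
  rewrite -mulr_sumr sum_D2.
  by field; apply: lt0r_neq0.
rewrite target -sumrB.
apply: (le_trans (ler_norm_sum _ _ _)).
apply: (@le_trans _ _ (\sum_(zs : n.-tuple bool)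
    (3 * N ^+ 3 * lam ^+ 3 * (N^-1 * (1 - lam + lam * Pp R n ts zs)) +
     2 * N ^+ 4 * lam ^+ 3 * N^-1))).
  apply: ler_sum => zs _.
  have [th0 thle hT hA key] := @key_theta R _ _ _ _ hN1 hl hlN (Pp_bounds zs) (Pm_bounds zs).
  rewrite cd_true theta_eq.
  set A := 1 - lam + lam * Pp R n ts zs in key th0 thle hA hT *.
  set Am := 1 - lam + lam * Pm R n ts zs in key th0 thle hT *.
  set th := `|A - Am| / (A + Am) in key th0 thle *.
  set D2 := lam ^+ 2 * (Pp R n ts zs - Pm R n ts zs) ^+ 2 / 4 in key *.
  have hth : 0 <= th <= 1/2.
    apply/andP; split => //; apply: (le_trans thle).
    have : lam * N <= 1 / 2 by lra.
    done.
  have HH := hH _ hth.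
  have e : N^-1 * A * Hh th - N^-1 * D2 = N^-1 * (A * (Hh th - th ^+ 2) + (A * th ^+ 2 - D2)).
    by ring.
  rewrite e normrM (gtr0_norm (_ : 0 < N^-1)); last by rewrite invr_gt0.
  have b1 : `|A * (Hh th - th ^+ 2) + (A * th ^+ 2 - D2)| <=
      A * (3 * th ^+ 3) + 2 * N ^+ 4 * lam ^+ 3.
    apply: (le_trans (ler_normD _ _)); apply: lerD => //.
    by rewrite normrM ger0_norm // ler_wpM2l.
  have b2 : th ^+ 3 <= (lam * N) ^+ 3 by rewrite lerXn2r // nnegrE //; nra.
  have b3 : A * (3 * th ^+ 3) <= A * (3 * (lam * N) ^+ 3).
    by apply: ler_wpM2l => //; lra.
  have hNi : 0 < N^-1 by rewrite invr_gt0.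
  have : N^-1 * `|A * (Hh th - th ^+ 2) + (A * th ^+ 2 - D2)| <=
         N^-1 * (A * (3 * (lam * N) ^+ 3) + 2 * N ^+ 4 * lam ^+ 3).
    by apply: ler_wpM2l; [lra | lra].
  move=> h; apply: (le_trans h); rewrite le_eqVlt; apply/orP; left; apply/eqP; ring.
have mN : forall x : R, x *+ (2 ^ n) = x * N by move=> x; rewrite -natrX mulr_natr.
have sA : \sum_(zs : n.-tuple bool) (1 - lam + lam * Pp R n ts zs) = N.
  rewrite big_split /= -mulr_sumr sum_Pp sumr_const card_tuple card_bool mN.
  ring.
rewrite big_split /= -mulr_sumr -mulr_sumr sA sumr_const card_tuple card_bool mN.
have hN0' : N != 0 by apply: lt0r_neq0.
have e : 3 * N ^+ 3 * lam ^+ 3 * (N^-1 * N) + 2 * N ^+ 4 * lam ^+ 3 * N^-1 * N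
   = 3 * N ^+ 3 * lam ^+ 3 + 2 * N ^+ 4 * lam ^+ 3 by field.
rewrite e.
have : N ^+ 3 <= N ^+ 4 by apply: ler_weXn2l.
have : 0 <= lam ^+ 3 by apply: exprn_ge0.
move=> h3 h4.
have : 3 * lam ^+ 3 * N ^+ 3 <= 3 * lam ^+ 3 * N ^+ 4 by apply: ler_wpM2l => //; lra.
move=> h5.
have E1 : 3 * N ^+ 3 * lam ^+ 3 = 3 * lam ^+ 3 * N ^+ 3 by ring.
have E2 : 5 * N ^+ 4 * lam ^+ 3 = 3 * lam ^+ 3 * N ^+ 4 + 2 * N ^+ 4 * lam ^+ 3 by ring.
lra.
Qed.

End B3.

Section C.
Context d (T : measurableType d) (R : realType).
Variable mu : {measure set T -> \bar R}.
Local Open Scope ereal_scope.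
Import HBNNSimple.

Lemma le_any_integral (u v : T -> \bar R) : (forall x, 0 <= u x) -> (forall x, 0 <= v x) ->
  (forall x, u x <= v x) -> \int[mu]_x u x <= \int[mu]_x v x.
Proof.
move=> u0 v0 uv; rewrite (ge0_integralTE _ u0) (ge0_integralTE _ v0).
apply: ge_ereal_sup => _ [h /= hu <-].
apply: ereal_sup_ubound; exists h => //= x.
exact: le_trans (hu x) (uv x).
Qed.

Variable D : set T.
Hypothesis mD : measurable D.
Hypothesis muD : mu (~` D) = 0.

Lemma le_ae_integral (u v : T -> \bar R) : (forall x, 0 <= u x) -> (forall x, 0 <= v x) ->
  (forall x, D x -> u x <= v x) -> \int[mu]_x u x <= \int[mu]_x v x.
Proof.
move=> u0 v0 uv; rewrite (ge0_integralTE _ u0).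
apply: ge_ereal_sup => _ [h /= hu <-].
rewrite -integralT_nnsfun.
rewrite (@ge0_negligible_integral _ _ _ mu setT (~` D) (fun x => (h x)%:E)) //; last 3 first.
- exact: measurableC.
- by apply/measurable_realfun.measurable_EFinP; exact: measurable_funTS.
- by move=> x _; rewrite lee_fin.
rewrite setTD setCK integral_mkcond.
apply: le_any_integral => // x.
- by rewrite /patch; case: ifP => // _; rewrite lee_fin.
- rewrite /patch; case: ifP => [/set_mem Dx|_]; last exact: v0.
  exact: le_trans (hu x) (uv x Dx).
Qed.

Hypothesis muT : mu setT = 1.

Local Open Scope ring_scope.

Lemma bdd_integrable (g : T -> R) (B : R) : measurable_fun setT g ->
  (forall x, `|g x| <= B) -> mu.-integrable setT (EFin \o g).
Proof.
move=> mg hg; apply: measurable_bounded_integrable => //.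
  by rewrite muT ltry.
exists B; split; first by rewrite num_real.
by move=> M hM x _; apply: (le_trans (hg x)); apply: ltW.
Qed.

Lemma max0_mono (a b : R) : a <= b -> Num.max a 0 <= Num.max b 0.
Proof. by move=> h; rewrite ge_max !le_max h lexx !orbT. Qed.

Lemma intE_parts (g : T -> R) : (\int[mu]_x (g x)%:E =
   \int[mu]_x ((g^\+) x)%:E - \int[mu]_x ((g^\-) x)%:E)%E.
Proof.
rewrite integralE; congr (adde _ (oppe _)); apply: eq_integral => x _.
  by rewrite -[in RHS]/((EFin \o g^\+) x) -funerpos.
by rewrite -[in RHS]/((EFin \o g^\-) x) -funerneg.
Qed.

Lemma Rint_parts (g : T -> R) : mu.-integrable setT (EFin \o g) ->
  Rintegral mu setT g =
  fine (\int[mu]_x ((g^\+) x)%:E)%E - fine (\int[mu]_x ((g^\-) x)%:E)%E.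
Proof.
move=> ig; rewrite /Rintegral intE_parts.
have ip := integrable_funepos measurableT ig.
have iN := integrable_funeneg measurableT ig.
rewrite funerpos in ip; rewrite funerneg in iN.
by rewrite fineB; [ | exact: integrable_fin_num ip | exact: integrable_fin_num iN].
Qed.

Lemma fin_between (a b : \bar R) : (0 <= a)%E -> (a <= b)%E -> b \is a fin_num ->
  a \is a fin_num.
Proof.
move=> a0 ab bf; rewrite ge0_fin_numE //.
apply: le_lt_trans ab _; by rewrite ltey_eq bf.
Qed.

Lemma sandwich (f g : T -> R) (c B : R) : measurable_fun setT g ->
  (forall x, `|g x| <= B) -> (forall x, D x -> `|f x - g x| <= c) ->
  (exists x, D x) ->
  `|Rintegral mu setT f - Rintegral mu setT g| <= c.
Proof.
move=> mg hg hfg [x0 Dx0].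
have c0 : 0 <= c by apply: le_trans (hfg _ Dx0).
pose gp := fun x => g x + c.
pose gm := fun x => g x - c.
have mgp : measurable_fun setT gp by apply: measurable_realfun.measurable_funD.
have mgm : measurable_fun setT gm by apply: measurable_realfun.measurable_funB.
have igp : mu.-integrable setT (EFin \o gp).
  apply: (@bdd_integrable _ (B + c)) => // x; rewrite /gp.
  by apply: (le_trans (ler_normD _ _)); rewrite (ger0_norm c0) lerD2r.
have igm : mu.-integrable setT (EFin \o gm).
  apply: (@bdd_integrable _ (B + c)) => // x; rewrite /gm.
  by apply: (le_trans (ler_normB _ _)); rewrite (ger0_norm c0) lerD2r.
have ig : mu.-integrable setT (EFin \o g) by apply: (@bdd_integrable _ B).
have icst : mu.-integrable setT (EFin \o (fun _ : T => c)).
  by apply: (@bdd_integrable _ c) => // x; rewrite ger0_norm.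
have Rgp : Rintegral mu setT gp = Rintegral mu setT g + c.
  rewrite /gp RintegralD // Rintegral_cst // muT /= mulr1 //.
have Rgm : Rintegral mu setT gm = Rintegral mu setT g - c.
  rewrite /gm RintegralB // Rintegral_cst // muT /= mulr1 //.
have hD : forall x, D x -> gm x <= f x <= gp x.
  move=> x Dx; have := hfg x Dx; rewrite ler_norml /gm /gp => /andP[a b].
  by apply/andP; split; lra.
have fp : forall x, 0 <= (f^\+) x by move=> x; exact: funrpos_ge0.
have fn : forall x, 0 <= (f^\-) x by move=> x; exact: funrneg_ge0.
have P1 : (\int[mu]_x ((f^\+) x)%:E <= \int[mu]_x ((gp^\+) x)%:E)%E.
  apply: le_ae_integral => // x; rewrite ?lee_fin ?funrpos_ge0 // => Dx.
  by apply: max0_mono; case/andP: (hD x Dx).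
have P2 : (\int[mu]_x ((gm^\+) x)%:E <= \int[mu]_x ((f^\+) x)%:E)%E.
  apply: le_ae_integral => // x; rewrite ?lee_fin ?funrpos_ge0 // => Dx.
  by apply: max0_mono; case/andP: (hD x Dx).
have N1 : (\int[mu]_x ((f^\-) x)%:E <= \int[mu]_x ((gm^\-) x)%:E)%E.
  apply: le_ae_integral => // x; rewrite ?lee_fin ?funrneg_ge0 // => Dx.
  by apply: max0_mono; rewrite lerN2; case/andP: (hD x Dx).
have N2 : (\int[mu]_x ((gp^\-) x)%:E <= \int[mu]_x ((f^\-) x)%:E)%E.
  apply: le_ae_integral => // x; rewrite ?lee_fin ?funrneg_ge0 // => Dx.
  by apply: max0_mono; rewrite lerN2; case/andP: (hD x Dx).
have fin_pp : forall h, mu.-integrable setT (EFin \o h) ->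
    (\int[mu]_x ((h^\+) x)%:E)%E \is a fin_num.
  move=> h ih; have := integrable_funepos measurableT ih; rewrite funerpos.
  exact: integrable_fin_num.
have fin_nn : forall h, mu.-integrable setT (EFin \o h) ->
    (\int[mu]_x ((h^\-) x)%:E)%E \is a fin_num.
  move=> h ih; have := integrable_funeneg measurableT ih; rewrite funerneg.
  exact: integrable_fin_num.
have ge0p : forall h : T -> R, (0 <= \int[mu]_x ((h^\+) x)%:E)%E.
  by move=> h; apply: integral_ge0 => x _; rewrite lee_fin funrpos_ge0.
have ge0n : forall h : T -> R, (0 <= \int[mu]_x ((h^\-) x)%:E)%E.
  by move=> h; apply: integral_ge0 => x _; rewrite lee_fin funrneg_ge0.
have ffp : (\int[mu]_x ((f^\+) x)%:E)%E \is a fin_num.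
  exact: fin_between (ge0p f) P1 (fin_pp _ igp).
have ffn : (\int[mu]_x ((f^\-) x)%:E)%E \is a fin_num.
  exact: fin_between (ge0n f) N1 (fin_nn _ igm).
have Rf : Rintegral mu setT f =
   fine (\int[mu]_x ((f^\+) x)%:E)%E - fine (\int[mu]_x ((f^\-) x)%:E)%E.
  by rewrite /Rintegral intE_parts fineB.
have q1 := fine_le ffp (fin_pp _ igp) P1.
have q2 := fine_le (fin_pp _ igm) ffp P2.
have q3 := fine_le ffn (fin_nn _ igm) N1.
have q4 := fine_le (fin_nn _ igp) ffn N2.
have Ep := @Rint_parts gp igp.
have Em := @Rint_parts gm igm.
rewrite ler_norml; apply/andP; split; lra.
Qed.

End C.

Section L.
Variable R : realType.
Variable mu : {measure set R -> \bar R}.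
Hypothesis muT : mu setT = 1%E.
Let D : set R := `[0, 1]%classic.
Hypothesis muD : mu (~` D) = 0%E.
Variables p q : R -> R.
Variables Bp Bq : R.
Hypothesis mp : measurable_fun setT p.
Hypothesis mq : measurable_fun setT q.
Hypothesis hp : forall x, `|p x| <= Bp.
Hypothesis hq : forall x, `|q x| <= Bq.

Let mD : measurable D. Proof. exact: measurable_itv. Qed.

Lemma iint_approx n : forall (F : seq R -> R) (a b c : R),
  (forall ts, size ts = n -> all (fun t => 0 <= t <= 1) ts ->
     `|F ts - (a * \prod_(t <- ts) p t + b * \prod_(t <- ts) q t)| <= c) ->
  `|iint R mu n F - (a * (Rintegral mu setT p) ^+ n + b * (Rintegral mu setT q) ^+ n)| <= c.
Proof.
elim: n => [|n IH] F a b c hF.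
  by have := hF [::] erefl erefl; rewrite !big_nil !expr0.
rewrite /=.
set P := Rintegral mu setT p.
set Q := Rintegral mu setT q.
pose g := fun t => (a * P ^+ n) * p t + (b * Q ^+ n) * q t.
have mg : measurable_fun setT g.
  apply: measurable_realfun.measurable_funD;
  apply: measurable_realfun.measurable_funM => //; exact: measurable_cst.
have hg : forall x, `|g x| <= `|a * P ^+ n| * Bp + `|b * Q ^+ n| * Bq.
  move=> x; apply: (le_trans (ler_normD _ _)); rewrite !normrM.
  by apply: lerD; apply: ler_wpM2l.
have ip : mu.-integrable setT (EFin \o p) by apply: (@bdd_integrable _ _ _ mu muT p Bp mp hp).
have iq : mu.-integrable setT (EFin \o q) by apply: (@bdd_integrable _ _ _ mu muT q Bq mq hq).
have Rg : Rintegral mu setT g = a * P ^+ n.+1 + b * Q ^+ n.+1.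
  rewrite /g RintegralD //; last 2 first.
  - by apply: (@bdd_integrable _ _ _ mu muT (fun t => a * P ^+ n * p t) (`|a * P ^+ n| * Bp));
      [apply: measurable_realfun.measurable_funM => //; exact: measurable_cst
      | move=> x; rewrite normrM; apply: ler_wpM2l].
  - by apply: (@bdd_integrable _ _ _ mu muT (fun t => b * Q ^+ n * q t) (`|b * Q ^+ n| * Bq));
      [apply: measurable_realfun.measurable_funM => //; exact: measurable_cst
      | move=> x; rewrite normrM; apply: ler_wpM2l].
  by rewrite !RintegralZl // -/P -/Q !exprSr !mulrA.
rewrite -Rg.
apply: (@sandwich _ _ _ mu D mD muD muT _ g _ _ mg hg); last by exists 0; rewrite /D /= in_itv /= lexx ler01.
move=> t Dt.
have ht : 0 <= t <= 1 by move: Dt; rewrite /D /= in_itv.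
have := IH (fun s => F (t :: s)) (a * p t) (b * q t) c.
have e : a * p t * P ^+ n + b * q t * Q ^+ n = g t by rewrite /g; ring.
rewrite e; apply => ts hs hall.
have := hF (t :: ts); rewrite /= hs ht hall => /(_ erefl erefl).
by rewrite !big_cons !mulrA.
Qed.

End L.

Section F.
Variable R : realType.
Variable mu : probability R R.
Hypothesis hmu : mu `[0, 1]%classic = 1%E.
Let D : set R := `[0, 1]%classic.
Let mD : measurable D. Proof. exact: measurable_itv. Qed.
Let muT : (mu : {measure set R -> \bar R}) setT = 1%E. Proof. exact: probability_setT. Qed.
Let muD : (mu : {measure set R -> \bar R}) (~` D) = 0%E.
Proof. by have := probability_setC mu mD; rewrite hmu subee => // ->. Qed.

Let sq : R -> R := (fun t : R => t ^+ 2) \_ D.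
Let msq : measurable_fun setT sq.
Proof. by apply/(measurable_restrictT _ mD); exact: measurable_realfun.exprn_measurable. Qed.
Let sq01 x : 0 <= sq x <= 1.
Proof.
rewrite /sq /patch; case: ifP => [/set_mem|]; last by rewrite lexx ler01.
rewrite /D /= in_itv /= => /andP[a b].
by rewrite sqr_ge0 /=; rewrite expr2 mulr_ile1.
Qed.
Let hsq x : `|sq x| <= 1.
Proof. by have /andP[a b] := sq01 x; rewrite ger0_norm. Qed.

Let isq : mu.-integrable setT (EFin \o sq).
Proof. exact: (@bdd_integrable _ _ _ mu muT sq 1 msq hsq). Qed.
Let icst (c : R) : mu.-integrable setT (EFin \o (fun _ : R => c)).
Proof.
apply: (@bdd_integrable _ _ _ mu muT _ `|c|) => //; exact: measurable_cst.
Qed.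

Lemma C_eq : C_chi2 R mu = Rintegral mu setT sq.
Proof.
have := @sandwich _ _ _ mu D mD muD muT (fun t => t ^+ 2) sq 0 1 msq hsq.
move=> /(_ _ _) h; apply/eqP; rewrite -subr_eq0 -normr_le0; apply: h.
  move=> x Dx; rewrite /sq /patch; case: ifP => [_|]; first by rewrite subrr normr0.
  by move/negP; case; apply/mem_set.
by exists 0; rewrite /D /= in_itv /= lexx ler01.
Qed.

Lemma C_01 : 0 <= C_chi2 R mu <= 1.
Proof.
rewrite C_eq; apply/andP; split.
  by apply: Rintegral_ge0 => x _; case/andP: (sq01 x).
have := @le_Rintegral _ _ _ mu setT sq (fun _ => 1) measurableT isq (icst 1).
rewrite Rintegral_cst // muT /= mulr1; apply => x _; by case/andP: (sq01 x).
Qed.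

Let p : R -> R := fun t => 1 + sq t.
Let q : R -> R := fun t => 1 - sq t.

Lemma Rp : Rintegral mu setT p = 1 + C_chi2 R mu.
Proof.
by rewrite /p RintegralD // Rintegral_cst // muT /= mulr1 C_eq.
Qed.

Lemma Rq : Rintegral mu setT q = 1 - C_chi2 R mu.
Proof.
by rewrite /q RintegralB // Rintegral_cst // muT /= mulr1 C_eq.
Qed.

Lemma main_gen (n : nat) (lam : R) (Hh : R -> R) :
  (forall x, 0 <= x <= 1/2 -> `|Hh x - x ^+ 2| <= 3 * x ^+ 3) ->
  0 <= lam -> 2 * 2 ^+ n * lam <= 1 ->
  `| iint R mu n (fun ts => \sum_(zs : n.-tuple bool)
        comp_dens R lam n true ts zs * Hh (theta_out R lam n ts zs))
     - lam ^+ 2 * (1 / 2 * ((1 + C_chi2 R mu) ^+ n - (1 - C_chi2 R mu) ^+ n)) |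
   <= 5 * (2 ^+ n) ^+ 4 * lam ^+ 3.
Proof.
move=> hH hl hlN.
have mp : measurable_fun setT p.
  by apply: measurable_realfun.measurable_funD => //; exact: measurable_cst.
have mq : measurable_fun setT q.
  by apply: measurable_realfun.measurable_funB => //; exact: measurable_cst.
have hp : forall x, `|p x| <= 2.
  by move=> x; rewrite /p; have /andP[a b] := sq01 x; rewrite ger0_norm; lra.
have hq : forall x, `|q x| <= 2.
  by move=> x; rewrite /q; have /andP[a b] := sq01 x; rewrite ger0_norm; lra.
have := @iint_approx R mu muT muD p q 2 2 mp mq hp hq n _ (lam ^+ 2 / 2) (- (lam ^+ 2 / 2))
   (5 * (2 ^+ n) ^+ 4 * lam ^+ 3).
rewrite Rp Rq.
have -> : lam ^+ 2 / 2 * (1 + C_chi2 R mu) ^+ n + - (lam ^+ 2 / 2) * (1 - C_chi2 R mu) ^+ n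
   = lam ^+ 2 * (1 / 2 * ((1 + C_chi2 R mu) ^+ n - (1 - C_chi2 R mu) ^+ n)) by ring.
apply => ts hs hall.
have ht : forall i : nat, (i < n)%N -> 0 <= nth 0 ts i <= 1.
  move=> i hi; move/all_nthP: hall; apply; by rewrite hs.
have pt := @pointwise R n ts ht lam Hh hH hl hlN.
have e1 : \prod_(t <- ts) p t = \prod_(i < n) (1 + nth 0 ts i ^+ 2).
  rewrite (big_nth 0) hs big_mkord; apply: eq_bigr => i _.
  rewrite /p /sq /patch; case: ifP => // /negP; case; apply/mem_set.
  by rewrite /D /= in_itv /=; apply: ht.
have e2 : \prod_(t <- ts) q t = \prod_(i < n) (1 - nth 0 ts i ^+ 2).
  rewrite (big_nth 0) hs big_mkord; apply: eq_bigr => i _.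
  rewrite /q /sq /patch; case: ifP => // /negP; case; apply/mem_set.
  by rewrite /D /= in_itv /=; apply: ht.
rewrite e1 e2.
have -> : lam ^+ 2 / 2 * \prod_(i < n) (1 + nth 0 ts i ^+ 2) +
    - (lam ^+ 2 / 2) * \prod_(i < n) (1 - nth 0 ts i ^+ 2) =
   lam ^+ 2 / 2 * (\prod_(i < n) (1 + nth 0 ts i ^+ 2) - \prod_(i < n) (1 - nth 0 ts i ^+ 2))
   by ring.
exact: pt.
Qed.

End F.

Theorem mainTheorem17 (R : realType) (r : nat) (hr : (2 <= r)%N) :
  exists d0 K : R, 0 < d0 /\ 0 < K /\
  forall (d lam : R), d0 < d -> 0 <= lam <= 1 ->
    (r - 1)%:R * d * lam ^+ 2 <= 1 ->
  forall (mu : probability R R), mu `[0, 1]%classic = 1%E ->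
    `| mean_atanh_tilde R mu lam (r - 1) - s_fun R r lam (C_chi2 R mu) | <= K * lam ^+ 3 /\
    `| var_atanh_tilde R mu lam (r - 1) - s_fun R r lam (C_chi2 R mu) | <= K * lam ^+ 3.
Proof.
pose N : R := 2 ^+ (r - 1).
have hN1 : 1 <= N by apply: exprn_ege1; lra.
have hN4 : N <= N ^+ 4 by rewrite -{1}(expr1 N); apply: ler_weXn2l.
have hN48 : N ^+ 4 <= N ^+ 8 by apply: ler_weXn2l.
exists (4 * N ^+ 2), (5 * N ^+ 4 + 36 * N ^+ 8).
split; first by rewrite mulr_gt0 // exprn_gt0 //; lra.
split; first by have := exprn_ge0 8 (ltW (lt_le_trans ltr01 hN1)); lra.
move=> d lam hd /andP[hl0 hl1] hdl mu hmu.
have hn : 1 <= ((r - 1)%:R : R) by rewrite ler1n; rewrite subn_gt0.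
have hd0 : 0 < d by have := exprn_ge0 2 (ltW (lt_le_trans ltr01 hN1)); lra.
have hl2 : 0 <= lam ^+ 2 by apply: exprn_ge0.
have h1 : d * lam ^+ 2 <= 1.
  have : d * lam ^+ 2 <= (r - 1)%:R * d * lam ^+ 2.
    rewrite -mulrA ler_peMl //; by apply: mulr_ge0; lra.
  lra.
have h2 : 4 * N ^+ 2 * lam ^+ 2 <= 1.
  have : 4 * N ^+ 2 * lam ^+ 2 <= d * lam ^+ 2 by apply: ler_wpM2r => //; lra.
  lra.
have h2N : 2 * N * lam <= 1.
  have e : 4 * N ^+ 2 * lam ^+ 2 = (2 * N * lam) ^+ 2 by ring.
  have : 0 <= 2 * N * lam by apply: mulr_ge0 => //; lra.
  rewrite e in h2; nra.
have hA : forall x : R, 0 <= x <= 1/2 ->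
   `|(fun t => \sum_(s : bool) (1 + sgnb R s * t) / 2 * atanh R (sgnb R s * t)) x - x ^+ 2|
     <= 3 * x ^+ 3.
  move=> x hx /=; apply: (le_trans (@H_atanh R x hx)).
  have : 0 <= x ^+ 3 by apply: exprn_ge0; case/andP: hx.
  lra.
have hA2 : forall x : R, 0 <= x <= 1/2 ->
   `|(fun t => \sum_(s : bool) (1 + sgnb R s * t) / 2 * (fun v => atanh R v ^+ 2) (sgnb R s * t)) x
     - x ^+ 2| <= 3 * x ^+ 3.
  by move=> x hx /=; apply: (@H_atanh2 R x hx).
have Em : `|mean_atanh_tilde R mu lam (r - 1) - s_fun R r lam (C_chi2 R mu)|
   <= 5 * N ^+ 4 * lam ^+ 3.
  exact: (@main_gen R mu hmu (r - 1) lam _ hA hl0 h2N).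
have Em2 : `|tilde_expect R mu lam (r - 1) (fun v => atanh R v ^+ 2) - s_fun R r lam (C_chi2 R mu)|
   <= 5 * N ^+ 4 * lam ^+ 3.
  exact: (@main_gen R mu hmu (r - 1) lam _ hA2 hl0 h2N).
have hl3 : 0 <= lam ^+ 3 by apply: exprn_ge0.
have hK : 5 * N ^+ 4 * lam ^+ 3 <= (5 * N ^+ 4 + 36 * N ^+ 8) * lam ^+ 3.
  have : 0 <= 36 * N ^+ 8 * lam ^+ 3.
    by apply: mulr_ge0 => //; apply: mulr_ge0; [lra | apply: exprn_ge0; lra].
  have e : (5 * N ^+ 4 + 36 * N ^+ 8) * lam ^+ 3 = 5 * N ^+ 4 * lam ^+ 3 + 36 * N ^+ 8 * lam ^+ 3
    by ring.
  lra.
split; first exact: le_trans Em hK.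
set m := mean_atanh_tilde R mu lam (r - 1) in Em *.
set s := s_fun R r lam (C_chi2 R mu) in Em Em2 *.
set M2 := tilde_expect R mu lam (r - 1) (fun v => atanh R v ^+ 2) in Em2.
have -> : var_atanh_tilde R mu lam (r - 1) = M2 - m ^+ 2 by [].
have hC := @C_01 R mu hmu.
set C := C_chi2 R mu in hC.
have hs : `|s| <= lam ^+ 2 * N.
  rewrite /s /s_fun normrM ger0_norm //.
  apply: ler_wpM2l => //.
  case/andP: hC => c0 c1.
  have a1 : 0 <= (1 + C) ^+ (r - 1) by apply: exprn_ge0; lra.
  have a2 : (1 + C) ^+ (r - 1) <= N by rewrite /N; apply: lerXn2r; rewrite ?nnegrE; lra.
  have b1 : 0 <= (1 - C) ^+ (r - 1) by apply: exprn_ge0; lra.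
  have b2 : (1 - C) ^+ (r - 1) <= 1 by apply: exprn_ile1; lra.
  rewrite ler_norml; apply/andP; split; lra.
have hm : `|m| <= lam ^+ 2 * (N + 5 * N ^+ 4).
  have : `|m| <= `|s| + 5 * N ^+ 4 * lam ^+ 3.
    have : `|m| <= `|m - s| + `|s| by rewrite -{1}(subrK s m); apply: ler_normD.
    lra.
  have : lam ^+ 3 <= lam ^+ 2 by rewrite exprS ler_piMl.
  have : 0 <= 5 * N ^+ 4 by apply: mulr_ge0; [lra | apply: exprn_ge0; lra].
  nra.
have hm2 : m ^+ 2 <= 36 * N ^+ 8 * lam ^+ 3.
  have q0 : 0 <= lam ^+ 2 * (N + 5 * N ^+ 4).
    by apply: mulr_ge0 => //; have := exprn_ge0 4 (ltW (lt_le_trans ltr01 hN1)); lra.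
  have : m ^+ 2 <= (lam ^+ 2 * (N + 5 * N ^+ 4)) ^+ 2.
    by rewrite -real_normK ?num_real //; apply: lerXn2r; rewrite ?nnegrE //.
  have e : (lam ^+ 2 * (N + 5 * N ^+ 4)) ^+ 2 = lam ^+ 4 * (N + 5 * N ^+ 4) ^+ 2 by ring.
  have q1 : lam ^+ 4 <= lam ^+ 3 by rewrite exprS ler_piMl.
  have q2 : (N + 5 * N ^+ 4) ^+ 2 <= 36 * N ^+ 8.
    have : N + 5 * N ^+ 4 <= 6 * N ^+ 4 by lra.
    have : 0 <= N + 5 * N ^+ 4 by lra.
    have e8 : 36 * N ^+ 8 = (6 * N ^+ 4) ^+ 2 by ring.
    rewrite e8 => hh1 hh2; apply: lerXn2r => //; rewrite ?nnegrE //; lra.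
  have q3 : 0 <= (N + 5 * N ^+ 4) ^+ 2 by apply: sqr_ge0.
  rewrite e; move=> h.
  have : lam ^+ 4 * (N + 5 * N ^+ 4) ^+ 2 <= lam ^+ 3 * (36 * N ^+ 8).
    apply: ler_pM => //; apply: exprn_ge0; lra.
  lra.
have : 0 <= m ^+ 2 by apply: sqr_ge0.
move=> hm0.
have e : M2 - m ^+ 2 - s = (M2 - s) - m ^+ 2 by ring.
rewrite e; apply: (le_trans (ler_normB _ _)).
rewrite (ger0_norm hm0).
have e2 : (5 * N ^+ 4 + 36 * N ^+ 8) * lam ^+ 3 = 5 * N ^+ 4 * lam ^+ 3 + 36 * N ^+ 8 * lam ^+ 3
    by ring.
lra.
Qed.
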